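(* Consider the coupled vapour/liquid heat equations on fixed (transformed) domains \[ \beta_v\big((J_v T_v)_\tau + (a_v T_v)_\xi\big) = k_v\big(J_v^{-1} T_{v,\xi}\big)_\xi,\quad \xi\in\Omega_v=[\xi_0,\delta],\qquad \beta_l\big((J_l T_l)_\tau + (a_l T_l)_\eta\big) = k_l\big(J_l^{-1} T_{l,\eta}\big)_\eta,\quad \eta\in\Omega_l=[\delta,\eta_n], \] with the interface conditions imposed strongly, $T_v = T_l = T_\delta$ at the interface $\xi=\eta=\delta$, where the transformed wave speeds are $a_v = u_v - x_\tau$, $a_l = u_l - x_\tau$, the interface (mesh) velocity $\tilde u_\delta = x_\tau$ at the interface satisfies \[ \rho_v h_{lv}\,\tilde u_\delta = \big[k_l J_l^{-1} T_{l,\eta} - k_v J_v^{-1} T_{v,\xi}\big]_\delta , \] and the interface mass relation $(u_l)_\delta = \gamma (u_v)_\delta + (1-\gamma)\tilde u_\delta$, $\gamma=\rho_v/\rho_l$, holds, so that $(a_v)_\delta = (u_v)_\delta - \tilde u_\delta$ and $(a_l)_\delta = \gamma (a_v)_\delta$. Then, ignoring outer boundary contributions, this strong interface treatment is dissipative and energy bounded if $(a_v)_\delta<0$ and $\tilde u_\delta \ge 0$, and it is energy bounded otherwise.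
   Context: Physical setting: a one-dimensional two-phase (vapour $v$, liquid $l$) evaporation problem with a moving evaporation interface $x_\delta(t)$, originally $\beta_v((T_v)_t + u_v (T_v)_x) = k_v (T_v)_{xx}$ on $[x_0,x_\delta]$ and $\beta_l((T_l)_t + u_l (T_l)_x) = k_l (T_l)_{xx}$ on $[x_\delta,x_n]$, with $T_v=T_l=T_\delta$ at $x_\delta(t)$. Here $T$ is temperature, $\rho$ density, $C_p$ specific heat at constant pressure, $k>0$ the scaled heat conduction coefficient, $\beta=\rho C_p>0$; the given evaporation temperature $T_\delta>0$ and latent heat $h_{lv}>0$ are external data; the velocities $u_v,u_l$ are positive. The problem is mapped to fixed domains by time-dependent coordinate transformations $x=x(\xi,\tau)$ (vapour), $x=x(\eta,\tau)$ (liquid), $t=\tau$, with Jacobians $J_v,J_l>0$ satisfying $J_v\xi_x=1$, $J_v\xi_t=-x_\tau$, $(J_v)_\tau+(J_v\xi_t)_\xi=0$ and analogously $J_l\eta_x=1$, $J_l\eta_t=-x_\tau$, $(J_l)_\tau+(J_l\eta_t)_\eta=0$. The paper asserts that $C_0=(\beta_l\gamma-\beta_v)T_\delta^2=\rho_v[(C_p)_l-(C_p)_v]T_\delta^2>0$ and $C_1=2T_\delta\rho_v h_{lv}>0$. The energy is $E(\tau)=\beta_v\int_{\xi_0}^{\delta}T_v^2J_v\,d\xi+\beta_l\int_\delta^{\eta_n}T_l^2J_l\,d\eta$; ''energy bounded'' means (with outer-boundary terms ignored) that $E$ at any time is bounded by its initial value plus the time integral of interface terms that are bounded in terms of the given data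 (using e.g. that $\int_0^t\tilde u_\delta\,d\tau = x_\delta(t)-x_\delta(0)$ is bounded by the domain size); ''dissipative'' means the interface terms in the energy rate $\frac{dE}{d\tau}+2k_v\int J_v^{-1}T_{v,\xi}^2d\xi+2k_l\int J_l^{-1}T_{l,\eta}^2d\eta$ are non-positive. *)

(* Defs.v *)
From Stdlib Require Import Reals.
From Coquelicot Require Import Coquelicot.
Open Scope R_scope.

Definition dx (f : R -> R -> R) : R -> R -> R :=
  fun x t => Derive (fun y => f y t) x.
Definition dt (f : R -> R -> R) : R -> R -> R :=
  fun x t => Derive (fun s => f x s) t.

Definition C1_2d (f : R -> R -> R) : Prop :=
  (forall x t, ex_derive (fun y => f y t) x) /\
  (forall x t, ex_derive (fun s => f x s) t) /\
  (forall x t, continuity_2d_pt f x t) /\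
  (forall x t, continuity_2d_pt (dx f) x t) /\
  (forall x t, continuity_2d_pt (dt f) x t).

Definition C2_2d (f : R -> R -> R) : Prop :=
  C1_2d f /\ C1_2d (dx f) /\ C1_2d (dt f).

(* Energy E(tau) = beta_v int_{xi0}^{delta} T_v^2 J_v + beta_l int_{delta}^{eta_n} T_l^2 J_l,
   with J = x_xi (J xi_x = 1). *)
Definition energy (bv bl xi0 delta etan : R) (Tv xv Tl xl : R -> R -> R) (t : R) : R :=
  bv * RInt (fun xi => Tv xi t ^ 2 * dx xv xi t) xi0 delta
  + bl * RInt (fun eta => Tl eta t ^ 2 * dx xl eta t) delta etan.

Definition dissipation (kv kl xi0 delta etan : R) (Tv xv Tl xl : R -> R -> R) (t : R) : R :=
  2 * kv * RInt (fun xi => / dx xv xi t * dx Tv xi t ^ 2) xi0 delta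
  + 2 * kl * RInt (fun eta => / dx xl eta t * dx Tl eta t ^ 2) delta etan.

(* Outer boundary contributions (at xi = xi0 and eta = eta_n) to dE/dtau + dissipation,
   with transformed wave speeds a = u - x_tau. These are the terms that are "ignored". *)
Definition outer_terms (bv bl kv kl xi0 etan : R) (Tv xv Tl xl : R -> R -> R)
    (uv ul : R -> R) (t : R) : R :=
  bv * (uv t - dt xv xi0 t) * Tv xi0 t ^ 2
  - 2 * kv * Tv xi0 t * / dx xv xi0 t * dx Tv xi0 t
  - bl * (ul t - dt xl etan t) * Tl etan t ^ 2
  + 2 * kl * Tl etan t * / dx xl etan t * dx Tl etan t.

(* Main.v *)
Require Import Defs.
From Stdlib Require Import Reals Lra.
From Coquelicot Require Import Coquelicot.
Open Scope R_scope.

Lemma c2d_1 f x y : continuity_2d_pt f x y -> continuous (fun u => f u y) x.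
Proof.
  intros H. apply continuity_pt_filterlim. apply continuity_pt_locally.
  intros eps. destruct (H eps) as [d Hd]. exists d. intros u Hu.
  apply Hd. exact Hu. rewrite Rminus_eq_0, Rabs_R0. apply cond_pos.
Qed.

Lemma c2d_swap f x y : continuity_2d_pt f x y -> continuity_2d_pt (fun u v => f v u) y x.
Proof.
  intros H eps. destruct (H eps) as [d Hd]. exists d. intros u v Hu Hv. apply Hd; assumption.
Qed.

Definition Gf (T x : R -> R -> R) (t y : R) := / dx x y t * dx T y t.

Ltac c2d := repeat first [ apply continuity_2d_pt_plus | apply continuity_2d_pt_minus
  | apply continuity_2d_pt_mult | apply continuity_2d_pt_opp | apply continuity_2d_pt_const
  | match goal with H : forall _ _, continuity_2d_pt ?f _ _ |- continuity_2d_pt ?f _ _ => apply H end ].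

Lemma phase (be k a b : R) (u : R -> R) (T x : R -> R -> R) (t : R)
  (HT : C2_2d T) (Hx : C2_2d x) (Hab : a < b) (Ht : 0 <= t) (Hk : 0 < k)
  (HJ : forall xi s, a <= xi <= b -> 0 <= s -> 0 < dx x xi s)
  (HGCL : forall xi s, a <= xi <= b -> 0 <= s -> dt (dx x) xi s = dx (dt x) xi s)
  (HPDE : forall xi s, a <= xi <= b -> 0 <= s ->
     be * (dt (fun y s => dx x y s * T y s) xi s
           + dx (fun y s => (u s - dt x y s) * T y s) xi s)
     = k * dx (fun y s => / dx x y s * dx T y s) xi s) :
  let Fl := fun y => - be * ((u t - dt x y t) * T y t ^ 2) + 2 * k * (T y t * Gf T x t y) in
  is_derive (fun s => be * RInt (fun xi => T xi s ^ 2 * dx x xi s) a b) t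
    (Fl b - Fl a - 2 * k * RInt (fun xi => / dx x xi t * dx T xi t ^ 2) a b)
  /\ ex_RInt (fun xi => / dx x xi t * dx T xi t ^ 2) a b.
Proof.
  intros Fl.
  destruct HT as [[T1 [T2 [T3 [T4 T5]]]] [[dT1 [dT2 [dT3 [dT4 dT5]]]] _]].
  destruct Hx as [[x1 [x2 [x3 [x4 x5]]]] [[dx1 [dx2 [dx3 [dx4 dx5]]]] [tx1 [tx2 [tx3 [tx4 tx5]]]]]].
  set (P := fun xi s => 2 * T xi s * dt T xi s * dx x xi s + T xi s * T xi s * dt (dx x) xi s).
  set (Q := fun xi => / dx x xi t * dx T xi t ^ 2).
  assert (Pd : forall xi s, is_derive (fun z => T xi z ^ 2 * dx x xi z) s (P xi s)).
  { intros xi s. auto_derive. split; [apply T2|split; [apply dx2|exact I]].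
    unfold P, dt; ring. }
  assert (Pc : forall xi s, continuity_2d_pt P xi s).
  { intros xi s. unfold P. c2d. }
  assert (Ie : forall s, ex_RInt (fun xi => T xi s ^ 2 * dx x xi s) a b).
  { intros s. apply (@ex_RInt_continuous R_CompleteNormedModule). intros z _.
    apply (c2d_1 (fun xi s => T xi s ^ 2 * dx x xi s)).
    apply continuity_2d_pt_ext with (fun xi s => T xi s * T xi s * dx x xi s).
    intros; ring. c2d. }
  assert (Jne : forall xi, Rmin a b <= xi <= Rmax a b -> dx x xi t <> 0).
  { intros xi Hxi. rewrite Rmin_left, Rmax_right in Hxi by lra.
    specialize (HJ xi t Hxi Ht). lra. }
  assert (Qc : forall xi, Rmin a b <= xi <= Rmax a b -> continuous Q xi).
  { intros xi Hxi. unfold Q.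
    apply (c2d_1 (fun xi s => / dx x xi s * dx T xi s ^ 2)).
    apply continuity_2d_pt_ext with (fun xi s => / dx x xi s * (dx T xi s * dx T xi s)).
    intros; ring. apply continuity_2d_pt_mult.
    apply continuity_2d_pt_inv. apply x4. apply Jne; exact Hxi. c2d. }
  assert (QI : ex_RInt Q a b) by (apply (@ex_RInt_continuous R_CompleteNormedModule); exact Qc).
  assert (PI : ex_RInt (fun xi => P xi t) a b).
  { apply (@ex_RInt_continuous R_CompleteNormedModule). intros z _. apply (c2d_1 P). apply Pc. }
  assert (HE : is_derive (fun s => RInt (fun xi => T xi s ^ 2 * dx x xi s) a b) t
                 (RInt (fun xi => P xi t) a b)).
  { pose proof (is_derive_RInt_param (fun s xi => T xi s ^ 2 * dx x xi s) a b t) as H.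
    rewrite (RInt_ext _ (fun xi => P xi t)) in H.
    2: { intros; apply is_derive_unique, Pd. }
    apply H.
    - apply filter_forall. intros s xi _. eexists; apply Pd.
    - intros xi _. apply continuity_2d_pt_ext with (fun u v => P v u).
      + intros; symmetry; apply is_derive_unique, Pd.
      + apply (c2d_swap P), Pc.
    - apply filter_forall. intros; apply Ie. }
  assert (HF : is_RInt (fun xi => be * P xi t + 2 * k * Q xi) a b (minus (Fl b) (Fl a))).
  { apply (@is_RInt_derive R_CompleteNormedModule).
    - intros xi Hxi. pose proof (Jne xi Hxi) as J0.
      rewrite Rmin_left, Rmax_right in Hxi by lra.
      assert (E1 : dt (fun y s => dx x y s * T y s) xi t = dt (dx x) xi t * T xi t + dx x xi t * dt T xi t).
      { unfold dt at 1. apply is_derive_unique. auto_derive.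
        split; [apply dx2|split; [apply T2|exact I]]. unfold dt; ring. }
      assert (E2 : dx (fun y s => (u s - dt x y s) * T y s) xi t = - dx (dt x) xi t * T xi t + (u t - dt x xi t) * dx T xi t).
      { unfold dx at 1. apply is_derive_unique. auto_derive.
        split; [apply tx1|split; [apply T1|exact I]]. unfold dx; ring. }
      assert (EG : ex_derive (Gf T x t) xi).
      { unfold Gf. auto_derive. repeat split; auto. }
      pose proof (HPDE xi t Hxi Ht) as H.
      change (dx (fun y s => / dx x y s * dx T y s) xi t) with (Derive (Gf T x t) xi) in H.
      rewrite E1, E2, (HGCL xi t Hxi Ht) in H.
      assert (HD : Derive (Gf T x t) xi = be * (dx (dt x) xi t * T xi t + dx x xi t * dt T xi t +
              (- dx (dt x) xi t * T xi t + (u t - dt x xi t) * dx T xi t)) / k).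
      { rewrite H. field. lra. }
      unfold Fl. auto_derive.
      + repeat split; auto.
      + change (Derive (fun x0 => Gf T x t x0) xi) with (Derive (Gf T x t) xi). rewrite HD. unfold P, Q, Gf. rewrite (HGCL xi t Hxi Ht). unfold dx, dt. field. split; [|lra].
        exact J0.
    - intros xi Hxi. apply (continuous_ext (fun xi => be * P xi t + 2 * k * (/ dx x xi t * (dx T xi t * dx T xi t)))).
      intros z; change (be * P z t + 2 * k * (/ dx x z t * (dx T z t * dx T z t)) = be * P z t + 2 * k * Q z :> R); unfold Q; ring.
      apply (c2d_1 (fun xi s => be * P xi s + 2 * k * (/ dx x xi s * (dx T xi s * dx T xi s)))).
      apply continuity_2d_pt_plus. apply continuity_2d_pt_mult. apply continuity_2d_pt_const. apply Pc.
      apply continuity_2d_pt_mult. apply continuity_2d_pt_const. apply continuity_2d_pt_mult.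
      apply continuity_2d_pt_inv. apply x4. apply Jne; exact Hxi. c2d. }
  assert (HF2 : is_RInt (fun xi => be * P xi t + 2 * k * Q xi) a b
                  (be * RInt (fun xi => P xi t) a b + 2 * k * RInt Q a b)).
  { apply (@is_RInt_plus R_NormedModule (fun xi => be * P xi t) (fun xi => 2 * k * Q xi) a b
       (be * RInt (fun xi => P xi t) a b) (2 * k * RInt Q a b)).
    - apply (@is_RInt_scal R_NormedModule (fun xi => P xi t) a b be).
      exact (@RInt_correct R_CompleteNormedModule _ a b PI).
    - apply (@is_RInt_scal R_NormedModule Q a b (2 * k)).
      exact (@RInt_correct R_CompleteNormedModule _ a b QI). }
  pose proof (is_RInt_unique _ _ _ _ HF) as U1.
  pose proof (is_RInt_unique _ _ _ _ HF2) as U2.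
  rewrite U1 in U2. unfold minus, plus, opp in U2; simpl in U2.
  split; [|exact QI].
  replace (Fl b - Fl a - 2 * k * RInt Q a b)
    with (be * RInt (fun xi => P xi t) a b).
  apply is_derive_scal. exact HE.
  lra.
Qed.

Lemma isd_eq (f : R -> R) (x l l' : R) : is_derive f x l -> l = l' -> is_derive f x l'.
Proof. intros H ->; exact H. Qed.
Lemma isd_plus (f g : R -> R) (x a b : R) : is_derive f x a -> is_derive g x b -> is_derive (fun y => f y + g y) x (a + b).
Proof. intros H1 H2; exact (is_derive_plus _ _ _ _ _ H1 H2). Qed.
Lemma isd_minus (f g : R -> R) (x a b : R) : is_derive f x a -> is_derive g x b -> is_derive (fun y => f y - g y) x (a - b).
Proof. intros H1 H2; exact (is_derive_minus _ _ _ _ _ H1 H2). Qed.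
Lemma isd_const (c x : R) : is_derive (fun _ => c) x 0.
Proof. exact (is_derive_const (K:=R_AbsRing) c x). Qed.

Lemma cont_2nd f x y z : continuity_2d_pt f x y -> continuity_2d_pt (fun _ v => f x v) z y.
Proof.
  intros H eps. destruct (H eps) as [d Hd]. exists d. intros u v _ Hv. apply Hd; auto.
  rewrite Rminus_eq_0, Rabs_R0. apply cond_pos.
Qed.

Lemma cont_Rmax0 s : continuous (fun y => Rmax y 0) s.
Proof.
  apply continuity_pt_filterlim. apply continuity_pt_locally. intros eps.
  exists eps. intros u Hu. change (Rabs (u - s) < eps) in Hu.
  unfold Rmax. destruct (Rle_dec u 0), (Rle_dec s 0); apply Rabs_def2 in Hu; apply Rabs_def1; lra.
Qed.

Lemma mono (g dg : R -> R) : (forall s, 0 <= s -> is_derive g s (dg s)) ->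
  (forall s, 0 <= s -> dg s <= 0) -> forall t, 0 <= t -> g t <= g 0.
Proof.
  intros Hd Hn t Ht. destruct (Req_dec t 0) as [->|Ht0]; [lra|].
  destruct (MVT_gen g 0 t dg) as [c [Hc Heq]].
  - intros x Hx. rewrite Rmin_left, Rmax_right in Hx by lra. apply Hd; lra.
  - intros x Hx. rewrite Rmin_left, Rmax_right in Hx by lra.
    apply continuity_pt_filterlim. apply (@ex_derive_continuous R_AbsRing R_NormedModule). eexists; apply Hd; lra.
  - rewrite Rmin_left, Rmax_right in Hc by lra.
    pose proof (Hn c ltac:(lra)). nra.
Qed.

Theorem proposition1
  (rhov rhol Cpv Cpl kv kl hlv Tdelta bv bl gamma xi0 delta etan : R)
  (Tv Tl xv xl : R -> R -> R) (uv ul xdelta : R -> R)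
  (Hrho : 0 < rhov /\ 0 < rhol) (HCp : 0 < Cpv /\ 0 < Cpl) (HCpl : Cpv < Cpl)
  (Hbv : bv = rhov * Cpv) (Hbl : bl = rhol * Cpl) (Hgamma : gamma = rhov / rhol)
  (Hk : 0 < kv /\ 0 < kl) (Hh : 0 < hlv) (HT : 0 < Tdelta)
  (Hdom : xi0 < delta < etan)
  (HregT : C2_2d Tv /\ C2_2d Tl) (Hregx : C2_2d xv /\ C2_2d xl)
  (Hu : forall t, 0 <= t -> 0 < uv t /\ 0 < ul t)
  (Hucont : forall t, continuous uv t /\ continuous ul t)
  (HJv : forall xi t, xi0 <= xi <= delta -> 0 <= t -> 0 < dx xv xi t)
  (HJl : forall eta t, delta <= eta <= etan -> 0 <= t -> 0 < dx xl eta t)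
  (HGCLv : forall xi t, xi0 <= xi <= delta -> 0 <= t ->
     dt (dx xv) xi t = dx (dt xv) xi t)
  (HGCLl : forall eta t, delta <= eta <= etan -> 0 <= t ->
     dt (dx xl) eta t = dx (dt xl) eta t)
  (HPDEv : forall xi t, xi0 <= xi <= delta -> 0 <= t ->
     bv * (dt (fun y s => dx xv y s * Tv y s) xi t
           + dx (fun y s => (uv s - dt xv y s) * Tv y s) xi t)
     = kv * dx (fun y s => / dx xv y s * dx Tv y s) xi t)
  (HPDEl : forall eta t, delta <= eta <= etan -> 0 <= t ->
     bl * (dt (fun y s => dx xl y s * Tl y s) eta t
           + dx (fun y s => (ul s - dt xl y s) * Tl y s) eta t)
     = kl * dx (fun y s => / dx xl y s * dx Tl y s) eta t)
  (Hxd : forall t, xv delta t = xdelta t /\ xl delta t = xdelta t)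
  (HTint : forall t, 0 <= t -> Tv delta t = Tdelta /\ Tl delta t = Tdelta)
  (HStefan : forall t, 0 <= t ->
     rhov * hlv * Derive xdelta t
     = kl * / dx xl delta t * dx Tl delta t - kv * / dx xv delta t * dx Tv delta t)
  (Hmass : forall t, 0 <= t -> ul t = gamma * uv t + (1 - gamma) * Derive xdelta t) :
  let E := energy bv bl xi0 delta etan Tv xv Tl xl in
  let D := dissipation kv kl xi0 delta etan Tv xv Tl xl in
  let B := outer_terms bv bl kv kl xi0 etan Tv xv Tl xl uv ul in
  let C0 := (bl * gamma - bv) * Tdelta ^ 2 in
  let C1 := 2 * Tdelta * rhov * hlv in
  (* energy bounded in every case *)
  (forall t, 0 <= t ->
     E t <= E 0 + RInt B 0 t + C0 * RInt uv 0 t - (C0 + C1) * (xdelta t - xdelta 0))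
  /\
  (* dissipative (and energy bounded) when (a_v)_delta < 0 and u~_delta >= 0 *)
  ((forall t, 0 < t -> uv t - Derive xdelta t < 0 -> 0 <= Derive xdelta t ->
      Derive E t + D t - B t <= 0)
   /\
   ((forall t, 0 <= t -> uv t - Derive xdelta t < 0 /\ 0 <= Derive xdelta t) ->
      forall t, 0 <= t -> E t <= E 0 + RInt B 0 t)).
Proof.
  intros E D B C0 C1.
  destruct Hrho as [Hrv Hrl]. destruct HCp as [Hcv Hcl]. destruct Hk as [Hkv Hkl].
  assert (HC0 : 0 < C0).
  { unfold C0. assert (Hq : bl * gamma - bv = rhov * (Cpl - Cpv)) by (subst; field; lra).
    rewrite Hq. apply Rmult_lt_0_compat; [nra| apply pow_lt; lra]. }
  assert (HC1 : 0 < C1) by (unfold C1; repeat apply Rmult_lt_0_compat; lra).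
  assert (Hdx : forall s, dt xv delta s = Derive xdelta s /\ dt xl delta s = Derive xdelta s).
  { intros s; unfold dt; split; apply Derive_ext; intros; apply Hxd. }
  assert (Key : forall t, 0 <= t ->
     is_derive E t (C0 * uv t - (C0 + C1) * Derive xdelta t + B t - D t) /\ 0 <= D t).
  { intros t Ht.
    pose proof (phase bv kv xi0 delta uv Tv xv t (proj1 HregT) (proj1 Hregx) ltac:(lra) Ht Hkv
      HJv HGCLv HPDEv) as Hv.
    pose proof (phase bl kl delta etan ul Tl xl t (proj2 HregT) (proj2 Hregx) ltac:(lra) Ht Hkl
      HJl HGCLl HPDEl) as Hl.
    cbv zeta in Hv, Hl. destruct Hv as [Dv Qv]. destruct Hl as [Dl Ql].
    split.
    - eapply isd_eq. exact (isd_plus _ _ _ _ _ Dv Dl).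
      unfold B, D, outer_terms, dissipation, C0, C1, Gf.
      destruct (HTint t Ht) as [H1 H2]. destruct (Hdx t) as [H3 H4].
      rewrite H1, H2, H3, H4, (Hmass t Ht).
      pose proof (HStefan t Ht) as S.
      assert (S2 : 2 * Tdelta * (rhov * hlv * Derive xdelta t) =
        2 * Tdelta * (kl * (/ dx xl delta t * dx Tl delta t)) - 2 * Tdelta * (kv * (/ dx xv delta t * dx Tv delta t))).
      { rewrite S. ring. }
      lra.
    - unfold D, dissipation.
      assert (P1 : 0 <= RInt (fun xi => / dx xv xi t * dx Tv xi t ^ 2) xi0 delta).
      { apply RInt_ge_0; [lra|exact Qv|]. intros z Hz.
        apply Rmult_le_pos; [apply Rlt_le, Rinv_0_lt_compat, HJv; lra| apply pow2_ge_0]. }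
      assert (P2 : 0 <= RInt (fun eta => / dx xl eta t * dx Tl eta t ^ 2) delta etan).
      { apply RInt_ge_0; [lra|exact Ql|]. intros z Hz.
        apply Rmult_le_pos; [apply Rlt_le, Rinv_0_lt_compat, HJl; lra| apply pow2_ge_0]. }
      nra. }

  destruct Hregx as [Hrxv Hrxl]. destruct HregT as [HrTv HrTl].
  destruct Hrxv as [[xv1 [xv2 [xv3 [xv4 xv5]]]] _].
  destruct Hrxl as [[xl1 [xl2 [xl3 [xl4 xl5]]]] _].
  destruct HrTv as [[Tv1 [Tv2 [Tv3 [Tv4 Tv5]]]] _].
  destruct HrTl as [[Tl1 [Tl2 [Tl3 [Tl4 Tl5]]]] _].
  assert (Bc : forall s, 0 <= s -> continuous B s).
  { intros s Hs.
    assert (Cu : forall z, continuity_2d_pt (fun _ v => uv v) z s).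
    { intros z. apply (continuity_1d_2d_pt_comp uv (fun _ v => v)).
      apply continuity_pt_filterlim, Hucont. apply continuity_2d_pt_id2. }
    assert (Cl : forall z, continuity_2d_pt (fun _ v => ul v) z s).
    { intros z. apply (continuity_1d_2d_pt_comp ul (fun _ v => v)).
      apply continuity_pt_filterlim, Hucont. apply continuity_2d_pt_id2. }
    assert (H : continuity_2d_pt (fun _ v => B v) 0 s).
    { unfold B, outer_terms.
      assert (K2 : forall f : R -> R -> R, forall x y, continuity_2d_pt f x y ->
                continuity_2d_pt (fun u v => f u v ^ 2) x y).
      { intros f x y Hf. apply continuity_2d_pt_ext with (fun u v => f u v * f u v).
        intros; ring. apply continuity_2d_pt_mult; exact Hf. }
      repeat first [ apply continuity_2d_pt_plus | apply continuity_2d_pt_minus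
        | apply continuity_2d_pt_mult | apply continuity_2d_pt_opp | apply continuity_2d_pt_const | apply K2
        | apply Cu | apply Cl
        | apply (continuity_2d_pt_inv (fun _ v => dx xv xi0 v)); [apply cont_2nd, xv4|
             apply Rgt_not_eq, HJv; lra]
        | apply (continuity_2d_pt_inv (fun _ v => dx xl etan v)); [apply cont_2nd, xl4|
             apply Rgt_not_eq, HJl; lra]
        | apply (cont_2nd Tv), Tv3 | apply (cont_2nd Tl), Tl3
        | apply (cont_2nd (dx Tv)), Tv4 | apply (cont_2nd (dx Tl)), Tl4
        | apply (cont_2nd (dt xv)), xv5 | apply (cont_2nd (dt xl)), xl5 ]. }
    apply (c2d_1 (fun u v => B u) s 0). apply (c2d_swap (fun _ v => B v)). exact H. }
  set (B' := fun s => B (Rmax s 0)).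
  assert (B'c : forall s, continuous B' s).
  { intros s. unfold B'. apply (continuous_comp (fun y => Rmax y 0) B).
    apply cont_Rmax0. apply Bc. apply Rmax_r. }
  assert (IB : forall s, is_derive (fun y => RInt B' 0 y) s (B' s)).
  { intros s. apply (@is_derive_RInt R_NormedModule B' (fun y => RInt B' 0 y) 0 s).
    apply filter_forall. intros y.
    exact (@RInt_correct R_CompleteNormedModule B' 0 y
      (@ex_RInt_continuous R_CompleteNormedModule B' 0 y (fun z _ => B'c z))).
    apply B'c. }
  assert (Iu : forall s, is_derive (fun y => RInt uv 0 y) s (uv s)).
  { intros s. apply (@is_derive_RInt R_NormedModule uv (fun y => RInt uv 0 y) 0 s).
    apply filter_forall. intros y.
    exact (@RInt_correct R_CompleteNormedModule uv 0 y
      (@ex_RInt_continuous R_CompleteNormedModule uv 0 y (fun z _ => proj1 (Hucont z)))).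
    apply Hucont. }
  assert (Ix : forall s, is_derive xdelta s (Derive xdelta s)).
  { intros s. apply Derive_correct. apply (ex_derive_ext (fun s => xv delta s)).
    intros; apply Hxd. apply xv2. }
  assert (BB : forall t, 0 <= t -> RInt B 0 t = RInt B' 0 t).
  { intros t Ht. apply RInt_ext. intros z Hz. rewrite Rmin_left in Hz by lra.
    unfold B'. rewrite Rmax_left by lra. reflexivity. }
  split; [|split].
  - intros t Ht.
    pose proof (mono (fun s => E s - RInt B' 0 s - C0 * RInt uv 0 s + (C0 + C1) * (xdelta s - xdelta 0))
       (fun s => - D s)) as M.
    rewrite BB by exact Ht.
    assert (M' : E t - RInt B' 0 t - C0 * RInt uv 0 t + (C0 + C1) * (xdelta t - xdelta 0) <=
                 E 0 - RInt B' 0 0 - C0 * RInt uv 0 0 + (C0 + C1) * (xdelta 0 - xdelta 0)).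
    { apply M; [| intros s Hs; pose proof (proj2 (Key s Hs)); lra | exact Ht].
      intros s Hs. eapply isd_eq.
      apply isd_plus. apply isd_minus. apply isd_minus. apply (proj1 (Key s Hs)). apply IB.
      apply is_derive_scal, Iu. apply is_derive_scal, isd_minus. apply Ix. apply isd_const.
      unfold B'. rewrite Rmax_left by lra. ring. }
    assert (Z : forall f, RInt f 0 0 = 0) by (intros; rewrite RInt_point; reflexivity). rewrite !Z in M'. lra.
  - intros t Ht Ha Hu0. destruct (Key t (Rlt_le _ _ Ht)) as [Hd _].
    rewrite (is_derive_unique _ _ _ Hd).
    assert (0 <= C1 * Derive xdelta t) by nra.
    assert (C0 * (uv t - Derive xdelta t) <= 0) by nra.
    lra.
  - intros Hall t Ht.
    pose proof (mono (fun s => E s - RInt B' 0 s)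
       (fun s => C0 * uv s - (C0 + C1) * Derive xdelta s - D s)) as M.
    rewrite BB by exact Ht.
    assert (M' : E t - RInt B' 0 t <= E 0 - RInt B' 0 0).
    { apply M; [| | exact Ht].
      - intros s Hs. eapply isd_eq.
        apply isd_minus. apply (proj1 (Key s Hs)). apply IB.
        unfold B'. rewrite Rmax_left by lra. ring.
      - intros s Hs. destruct (Hall s Hs) as [Ha Hu0]. pose proof (proj2 (Key s Hs)).
        assert (0 <= C1 * Derive xdelta s) by nra.
        assert (C0 * (uv s - Derive xdelta s) <= 0) by nra.
        lra. }
    assert (Z : forall f, RInt f 0 0 = 0) by (intros; rewrite RInt_point; reflexivity). rewrite !Z in M'. lra.
Qed.
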